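(* Let $\mathbb{F}$ be a field of characteristic $p>2$. Let $(\mathfrak g,[\cdot,\cdot],B)$ be a quadratic Lie algebra, $[p]:\mathfrak g\to\mathfrak g$ a $p$-mapping, and $\alpha\in\mathrm{End}_s(\mathfrak g,B)$ with $\alpha^2=\mathrm{id}$. Let $\mathfrak g_\alpha=(\mathfrak g,[\cdot,\cdot]_\alpha,\alpha,B_\alpha)$ where $[x,y]_\alpha=\alpha([x,y])$, $B_\alpha(x,y)=B(\alpha(x),y)$, and let $x^{[p]_\alpha}=\alpha^{p-1}(x^{[p]})$. Let $\mathscr{D}$ be a derivation of the Lie algebra $\mathfrak g$ which is restricted with respect to $[p]$, satisfies $\alpha\circ\mathscr{D}=\mathscr{D}\circ\alpha$, and has the $p$-property (there exist $\xi\in\mathbb{F}$, $a_0\in\mathfrak g$ with $\mathscr{D}^p=\xi\mathscr{D}+\mathrm{ad}(a_0)$ and $\mathscr{D}(a_0)=0$). Then $\mathscr{D}_\alpha:=\alpha\circ\mathscr{D}$ is an $\alpha$-derivation of $(\mathfrak g,[\cdot,\cdot]_\alpha,\alpha)$, it is restricted with respect to $[p]_\alpha$, i.e. $\mathscr{D}_\alpha(x^{[p]_\alpha})=[\alpha^{p-1}(x),[\alpha^{p-2}(x),\dots,[\alpha(x),\mathscr{D}_\alpha(x)]_\alpha\dots]_\alpha]_\alpha$ for all $x$, and $\mathscr{D}_\alpha$ has the $p$-property: there exist $\xi'\in\mathbb{F}$, $a_0'\in\mathfrak g$ with $\mathscr{D}_\alpha^p=\xi'\mathscr{D}_\alpha\circ\alpha^{p-1}+[a_0',\cdot]_\alpha\circ\alpha^{p-1}$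 and $\mathscr{D}_\alpha(a_0')=0$.
   Context: A quadratic Lie algebra is a Lie algebra with a symmetric nondegenerate invariant ($B([x,y],z)=B(x,[y,z])$) bilinear form $B$. $\mathrm{End}_s(\mathfrak g,B)$ is the set of linear $\phi$ with $B(\phi x,y)=B(x,\phi y)$. A $p$-mapping is Jacobson's restricted structure: $\mathrm{ad}(x^{[p]})=(\mathrm{ad}x)^p$, $(kx)^{[p]}=k^px^{[p]}$, and the usual sum formula $(x+y)^{[p]}=x^{[p]}+y^{[p]}+\sum_{i=1}^{p-1}s_i(x,y)$. A derivation $\mathscr{D}$ of $\mathfrak g$ is restricted with respect to $[p]$ if $\mathscr{D}(x^{[p]})=(\mathrm{ad}x)^{p-1}(\mathscr{D}(x))$ for all $x$. An $\alpha$-derivation of $(\mathfrak g,[\cdot,\cdot]_\alpha,\alpha)$ is a linear map $T$ with $T\circ\alpha=\alpha\circ T$ and $T([x,y]_\alpha)=[T(x),\alpha(y)]_\alpha+[\alpha(x),T(y)]_\alpha$. *)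

(* Defs.v *)
From HB Require Import structures.
From mathcomp Require Import all_boot all_order all_algebra.
Set Implicit Arguments. Unset Strict Implicit. Unset Printing Implicit Defensive.
Import Order.TTheory GRing.Theory Num.Theory.
Local Open Scope ring_scope.

Section LieDefs.
Variables (F : fieldType) (V : lmodType F).

Definition is_lie_bracket (br : V -> V -> V) : Prop :=
  [/\ (forall (a : F) x y z, br (a *: x + y) z = a *: br x z + br y z),
      (forall (a : F) x y z, br x (a *: y + z) = a *: br x y + br x z),
      (forall x, br x x = 0) &
      (forall x y z, br x (br y z) + br y (br z x) + br z (br x y) = 0)].

Definition is_quadratic (br : V -> V -> V) (B : V -> V -> F) : Prop :=
  [/\ (forall (a : F) x y z, B (a *: x + y) z = a * B x z + B y z),
      (forall x y, B x y = B y x),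
      (forall x, (forall y, B x y = 0) -> x = 0) &
      (forall x y z, B (br x y) z = B x (br y z))].

Definition is_B_symmetric (B : V -> V -> F) (phi : V -> V) : Prop :=
  forall x y, B (phi x) y = B x (phi y).

Definition adseq (br : V -> V -> V) (l : seq V) (z : V) : V :=
  foldr (fun u acc => br u acc) z l.

(* Jacobson's s_i(x,y): i s_i(x,y) is the coefficient of t^(i-1) in
   ad(t x + y)^(p-1)(x). Expanding, this coefficient is the sum over all words
   u in {x,y}^(p-1) containing exactly i-1 letters x of
   ad u_1 o ... o ad u_(p-1) (x). *)
Definition jacobson_s (p : nat) (br : V -> V -> V) (i : nat) (x y : V) : V :=
  (i%:R)^-1 *:
   \sum_(u : {ffun 'I_(p.-1) -> bool} | #|[set j | u j]| == i.-1)
      adseq br [seq (if u j then x else y) | j <- enum 'I_(p.-1)] x.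

Definition is_p_mapping (p : nat) (br : V -> V -> V) (pm : V -> V) : Prop :=
  [/\ (forall x y, br (pm x) y = iter p (br x) y),
      (forall (k : F) x, pm (k *: x) = k ^+ p *: pm x) &
      (forall x y, pm (x + y) = pm x + pm y + \sum_(1 <= i < p) jacobson_s p br i x y)].

Definition is_derivation (br : V -> V -> V) (D : V -> V) : Prop :=
  forall x y, D (br x y) = br (D x) y + br x (D y).

Definition is_restricted_derivation (p : nat) (br : V -> V -> V) (pm : V -> V)
  (D : V -> V) : Prop :=
  forall x, D (pm x) = iter p.-1 (br x) (D x).

Definition has_p_property (p : nat) (br : V -> V -> V) (D : V -> V) : Prop :=
  exists (xi : F) (a0 : V),
    (forall x, iter p D x = xi *: D x + br a0 x) /\ D a0 = 0.

Definition twist_bracket (br : V -> V -> V) (alpha : V -> V) : V -> V -> V :=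
  fun x y => alpha (br x y).
Definition twist_form (B : V -> V -> F) (alpha : V -> V) : V -> V -> F :=
  fun x y => B (alpha x) y.
Definition twist_pmap (p : nat) (pm : V -> V) (alpha : V -> V) : V -> V :=
  fun x => iter p.-1 alpha (pm x).

Definition is_alpha_derivation (br : V -> V -> V) (alpha : V -> V) (T : V -> V)
  : Prop :=
  (forall x, T (alpha x) = alpha (T x)) /\
  (forall x y, T (br x y) = br (T x) (alpha y) + br (alpha x) (T y)).

Fixpoint nested_twisted (br : V -> V -> V) (alpha : V -> V) (x z : V) (k : nat)
  : V :=
  match k with
  | 0 => z
  | k'.+1 => br (iter k alpha x) (nested_twisted br alpha x z k')
  end.

End LieDefs.

(* Main.v *)
Require Import Defs.
From HB Require Import structures.
From mathcomp Require Import all_boot all_order all_algebra.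
Import GRing.Theory.
Local Open Scope ring_scope.

Theorem proposition5p3 (F : fieldType) (p : nat) (V : lmodType F)
  (br : V -> V -> V) (B : V -> V -> F) (pm : V -> V)
  (alpha D : {linear V -> V}) :
  p \in [pchar F] -> (2 < p)%N ->
  is_lie_bracket br -> is_quadratic br B ->
  is_p_mapping p br pm ->
  is_B_symmetric B alpha ->
  (forall x, alpha (alpha x) = x) ->
  (forall x y, alpha (br x y) = br (alpha x) (alpha y)) ->
  is_derivation br D ->
  is_restricted_derivation p br pm D ->
  (forall x, alpha (D x) = D (alpha x)) ->
  has_p_property p br D ->
  let bra := twist_bracket br alpha in
  let pma := twist_pmap p pm alpha in
  let Da := fun x => alpha (D x) in
  [/\ is_alpha_derivation bra alpha Da,
      (forall x, Da (pma x) = nested_twisted bra alpha x (Da x) p.-1) &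
      exists (xi' : F) (a0' : V),
        (forall x, iter p Da x
                   = xi' *: Da (iter p.-1 alpha x) + bra a0' (iter p.-1 alpha x))
        /\ Da a0' = 0].
Proof.
move=> chp p2 _ _ _ _ aa ahom Dder Dres aD [xi [a0 [HDp Da0]]] bra pma Da.
have pr := pcharf_prime chp.
have podd : odd p by case: (even_prime pr) => // E; rewrite E in p2.
have ev : forall m x, iter (m.*2) alpha x = x.
  by elim=> // m IH x; rewrite doubleS !iterS IH aa.
have pm1 : p.-1 = (p.-1)./2.*2.
  have o1 : odd p.-1 = false by apply/negbTE; rewrite -oddS prednK ?prime_gt0.
  by rewrite -[LHS](odd_double_half p.-1) o1.
have ip1 : forall x, iter p.-1 alpha x = x by move=> x; rewrite pm1 ev.
have hn : forall n a b, iter n alpha (br a b) = br (iter n alpha a) (iter n alpha b).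
  by elim=> // n IH a b; rewrite !iterS IH ahom.
split.
- split=> [x|x y]; rewrite /Da /bra /twist_bracket.
    by rewrite -aD.
  by rewrite -aD aa Dder !ahom !aa.
- move=> x; rewrite /Da /pma /twist_pmap ip1 Dres.
  have key : forall k, nested_twisted bra alpha x (alpha (D x)) k
                       = iter k.+1 alpha (iter k (br x) (D x)).
    elim=> // k IH /=; rewrite IH /bra /twist_bracket.
    by rewrite -(iterS k.+1 alpha) [in RHS]iterS hn.
  rewrite key prednK ?prime_gt0 //.
  have -> : p = (p.-1).+1 by rewrite prednK ?prime_gt0.
  by rewrite iterS ip1.
- exists xi, a0; split; last by rewrite /Da Da0 linear0.
  move=> x; rewrite ip1 /bra /twist_bracket.
  have hD : forall n y, iter n alpha (D y) = D (iter n alpha y).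
    by elim=> // n IH y; rewrite !iterS IH aD.
  have it : forall n y, iter n Da y = iter n alpha (iter n D y).
    by elim=> // n IH y; rewrite !iterS IH /Da hD.
  rewrite it HDp.
  have -> : p = (p.-1).+1 by rewrite prednK ?prime_gt0.
  by rewrite iterS ip1 linearD linearZ.
Qed.
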